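(* Under the standing assumptions, $A$ (resp. $A^*$) acts diagonalizably on $V$ with eigenvalues $\theta_0,\dots,\theta_d$ (resp. $\theta^*_0,\dots,\theta^*_d$), and for $0\le i\le d$ the eigenspace of $A$ for $\theta_i$ (resp. of $A^*$ for $\theta^*_i$) has dimension $\binom{d}{i}$.
   Context: Let $\mathbb F$ be an algebraically closed field, $d\ge0$, and $q,a,b,c,a^*,b^*,c^*\in\mathbb F$ with $q,b,c,b^*,c^*$ nonzero and $q^2\ne\pm1$. Put $\theta_i=a+bq^{2i-d}+cq^{d-2i}$ and $\theta^*_i=a^*+b^*q^{2i-d}+c^*q^{d-2i}$ ($0\le i\le d$), and assume $\theta_0,\dots,\theta_d$ are mutually distinct and $\theta^*_0,\dots,\theta^*_d$ are mutually distinct (this forces $q^{2i}\ne1$ for $1\le i\le d$). $U_q(\widehat{\mathfrak{sl}}_2)$ is the associative unital $\mathbb F$-algebra with generators $e_i^{\pm},K_i^{\pm1}$ ($i\in\{0,1\}$) and relations $K_iK_i^{-1}=K_i^{-1}K_i=1$, $K_0K_1=K_1K_0$, $K_ie_i^{\pm}K_i^{-1}=q^{\pm2}e_i^{\pm}$, $K_ie_j^{\pm}K_i^{-1}=q^{\mp2}e_j^{\pm}$ ($i\ne j$), $e_i^+e_i^--e_i^-e_i^+=(K_i-K_i^{-1})/(q-q^{-1})$, $e_0^{\pm}e_1^{\mp}=e_1^{\mp}e_0^{\pm}$, and the $q$-Serre relations $(e_i^\pm)^3e_j^\pm-[3]_q(e_i^\pm)^2e_j^\pm e_i^\pm+[3]_qe_i^\pm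 e_j^\pm(e_i^\pm)^2-e_j^\pm(e_i^\pm)^3=0$ ($i\ne j$), where $[3]_q=q^2+1+q^{-2}$. Tensor products of modules are formed via $e_i^+(v\otimes w)=e_i^+v\otimes K_iw+v\otimes e_i^+w$, $e_i^-(v\otimes w)=e_i^-v\otimes w+K_i^{-1}v\otimes e_i^-w$, $K_i(v\otimes w)=K_iv\otimes K_iw$. For nonzero $\alpha\in\mathbb F$, $V(\alpha)$ is the module with basis $x,y$ and $K_1x=qx$, $K_1y=q^{-1}y$, $e_1^-x=y$, $e_1^-y=0$, $e_1^+x=0$, $e_1^+y=x$, $K_0x=q^{-1}x$, $K_0y=qy$, $e_0^-x=0$, $e_0^-y=q\alpha^{-1}x$, $e_0^+x=q^{-1}\alpha y$, $e_0^+y=0$. $V=V(\alpha_1)\otimes\cdots\otimes V(\alpha_d)$ with nonzero $\alpha_i\in\mathbb F$ (for $d=0$, the trivial module where each $e_i^\pm$ acts as $0$ and each $K_i^{\pm1}$ as $1$). Fix $u,v,u^*,v^*\in\mathbb F$ with $uv^*=-bb^*q^{-1}(q-q^{-1})^2$, $vu^*=-cc^*q^{-1}(q-q^{-1})^2$; set $R=ue_0^++ve_1^-K_1$, $L=u^*e_1^++v^*e_0^-K_0$, $A=a1+bK_0+cK_1+R$, $A^*=a^*1+b^*K_0+c^*K_1+L$. *)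

(* Defs.v *)
From HB Require Import structures.
From mathcomp Require Import all_boot all_order all_algebra.
Set Implicit Arguments. Unset Strict Implicit. Unset Printing Implicit Defensive.
Import Order.TTheory GRing.Theory Num.Theory.
Local Open Scope ring_scope.

(* CONVENTION: linear operators on F^n are n x n matrices acting on ROW
   vectors (MathComp's convention): the operator with matrix M sends v to
   v *m M.  Hence the entry M i j is the coefficient of basis vector j in the
   image of basis vector i, and the product X Y of operators (first Y, then X)
   has matrix  M(Y) *m M(X).  This is the convention of MathComp's
   [eigenspace], [eigenvalue] and [diagonalizable]. *)

Section Defs.
Variable F : fieldType.

(* Kronecker (tensor) product of matrices; the basis of F^m (x) F^n is
   indexed by pairs, enumerated through 'I_(m*n). *)
Definition tidx m n (k : 'I_(m * n)) : 'I_m * 'I_n :=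
  enum_val (cast_ord (esym (mxvec_cast m n)) k).

Definition tensmx m n (A : 'M[F]_m) (B : 'M[F]_n) : 'M[F]_(m * n) :=
  \matrix_(k, l) (A (tidx k).1 (tidx l).1 * B (tidx k).2 (tidx l).2).

(* The action of the generators e_0^+, e_0^-, e_1^+, e_1^-, K_0, K_1,
   K_0^{-1}, K_1^{-1} of U_q(sl2^) on an n-dimensional module. *)
Record uqrep (n : nat) := UqRep {
  E0p : 'M[F]_n; E0m : 'M[F]_n; E1p : 'M[F]_n; E1m : 'M[F]_n;
  K0 : 'M[F]_n; K1 : 'M[F]_n; K0i : 'M[F]_n; K1i : 'M[F]_n }.

(* Tensor product via the coproduct
   e^+ (v(x)w) = e^+ v (x) K w + v (x) e^+ w,
   e^- (v(x)w) = e^- v (x) w + K^{-1} v (x) e^- w,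
   K^{+-1} (v(x)w) = K^{+-1} v (x) K^{+-1} w. *)
Definition tensrep m n (X : uqrep m) (Y : uqrep n) : uqrep (m * n) :=
  UqRep (tensmx (E0p X) (K0 Y) + tensmx 1 (E0p Y))
        (tensmx (E0m X) 1 + tensmx (K0i X) (E0m Y))
        (tensmx (E1p X) (K1 Y) + tensmx 1 (E1p Y))
        (tensmx (E1m X) 1 + tensmx (K1i X) (E1m Y))
        (tensmx (K0 X) (K0 Y)) (tensmx (K1 X) (K1 Y))
        (tensmx (K0i X) (K0i Y)) (tensmx (K1i X) (K1i Y)).

Definition castrep m n (e : m = n) (X : uqrep m) : uqrep n :=
  UqRep (castmx (e, e) (E0p X)) (castmx (e, e) (E0m X))
        (castmx (e, e) (E1p X)) (castmx (e, e) (E1m X))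
        (castmx (e, e) (K0 X)) (castmx (e, e) (K1 X))
        (castmx (e, e) (K0i X)) (castmx (e, e) (K1i X)).

Definition trivrep : uqrep 1 := UqRep 0 0 0 0 1 1 1 1.

(* The evaluation module V(alpha), basis x (index 0), y (index 1). *)
Definition Vrep (q alpha : F) : uqrep 2 :=
  UqRep
    (* e_0^+ x = q^{-1} alpha y, e_0^+ y = 0 *)
    (\matrix_(i, j) (if (i == 0 :> nat) && (j == 1 :> nat) then q^-1 * alpha else 0))
    (* e_0^- x = 0, e_0^- y = q alpha^{-1} x *)
    (\matrix_(i, j) (if (i == 1 :> nat) && (j == 0 :> nat) then q * alpha^-1 else 0))
    (* e_1^+ x = 0, e_1^+ y = x *)
    (\matrix_(i, j) (if (i == 1 :> nat) && (j == 0 :> nat) then 1 else 0))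
    (* e_1^- x = y, e_1^- y = 0 *)
    (\matrix_(i, j) (if (i == 0 :> nat) && (j == 1 :> nat) then 1 else 0))
    (* K_0 x = q^{-1} x, K_0 y = q y *)
    (\matrix_(i, j) (if i == j then (if i == 0 :> nat then q^-1 else q) else 0))
    (* K_1 x = q x, K_1 y = q^{-1} y *)
    (\matrix_(i, j) (if i == j then (if i == 0 :> nat then q else q^-1) else 0))
    (\matrix_(i, j) (if i == j then (if i == 0 :> nat then q else q^-1) else 0))
    (\matrix_(i, j) (if i == j then (if i == 0 :> nat then q^-1 else q) else 0)).

Fixpoint Vtens (q : F) (s : seq F) : uqrep (2 ^ size s) :=
  match s return uqrep (2 ^ size s) with
  | [::] => trivrep
  | a :: s' => castrep (esym (expnS 2 (size s'))) (tensrep (Vrep q a) (Vtens q s'))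
  end.

Definition Aop (q a b c u v : F) (s : seq F) : 'M[F]_(2 ^ size s) :=
  let X := Vtens q s in
  a%:M + b *: K0 X + c *: K1 X + u *: E0p X + v *: (K1 X *m E1m X).

Definition Asop (q as_ bs cs us vs : F) (s : seq F) : 'M[F]_(2 ^ size s) :=
  let X := Vtens q s in
  as_%:M + bs *: K0 X + cs *: K1 X + us *: E1p X + vs *: (K0 X *m E0m X).

Definition thetaseq (q a b c : F) (d i : nat) : F :=
  a + b * q ^ ((2 * i)%:Z - d%:Z) + c * q ^ (d%:Z - (2 * i)%:Z).

End Defs.

(* Main.v *)
Require Import Defs.
From HB Require Import structures.
From mathcomp Require Import all_boot all_order all_algebra.
From Stdlib Require Import Lia.
Import Order.TTheory GRing.Theory Num.Theory.
Local Open Scope ring_scope.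

Module Aux.
Set Implicit Arguments. Unset Strict Implicit. Unset Printing Implicit Defensive.


Lemma arith1 (n r1 r2 r S : nat) : (r1 + r2 - n <= r)%N -> (r1 <= n)%N -> (r2 <= n)%N ->
  (n - r1 <= S)%N -> (n - r <= S + (n - r2))%N.
Proof. move=> /ssrnat.leP h1 /ssrnat.leP h2 /ssrnat.leP h3 /ssrnat.leP h4; apply/ssrnat.leP; rewrite -?plusE -?minusE in h1 h2 h3 h4 *; lia. Qed.

Section LA.
Variables (F : fieldType) (n d : nat) (M : 'M[F]_n) (w : 'I_n -> nat) (th : nat -> F).
Hypotheses (Hw : forall k, (w k <= d)%N)
  (Hth : forall i j, (i <= d)%N -> (j <= d)%N -> th i = th j -> i = j)
  (HMd : forall k, M k k = th (w k))
  (HMo : forall k l, k != l -> M k l != 0 -> w l = (w k).+1)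
  (Hc : forall i, (i <= d)%N -> #|[pred k | w k == i]| = 'C(d, i)).

Lemma minw (z : F) (v : 'rV[F]_n) : v != 0 -> v *m M = z *: v ->
  exists k, [/\ v 0 k != 0, z = th (w k) & forall l, (w l < w k)%N -> v 0 l = 0].
Proof.
move=> vn0 ev.
have: ~~ [forall k, v 0 k == 0].
  apply: contra vn0 => /forallP H; apply/eqP/matrixP => i k.
  by rewrite ord1 !mxE; apply/eqP.
rewrite negb_forall => /existsP[k0 Hk0].
case: (@arg_minnP _ k0 (fun k => v 0 k != 0) w Hk0) => k Hk Hmin.
have Hl : forall l, (w l < w k)%N -> v 0 l = 0.
  move=> l Hlt; apply/eqP; apply: contraTT Hlt => /Hmin; by rewrite -leqNgt.
exists k; split => //.
have := congr1 (fun m : 'M[F]_(1,n) => m 0 k) ev; rewrite !mxE (bigD1 k) //= big1 ?addr0.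
  rewrite HMd mulrC => h; apply/eqP; rewrite eq_sym; apply/eqP; exact: (mulIf Hk h).
move=> l nlk; case: (eqVneq (M l k) 0) => [->|]; first by rewrite mulr0.
move=> /(HMo nlk) Hw'; rewrite Hl ?mul0r // Hw' ltnSn //.
Qed.

Lemma step (m j : nat) (X : 'M[F]_(m, n)) :
  (forall i k, (w k < j)%N -> X i k = 0) ->
  forall i k, (w k < j.+1)%N -> (X *m (M - (th j)%:M)) i k = 0.
Proof.
move=> HX i k Hk; rewrite !mxE (bigD1 k) //= big1 ?addr0.
  rewrite !mxE eqxx mulr1n HMd.
  rewrite ltnS leq_eqVlt in Hk; case/orP: Hk => [/eqP->|/HX->].
    by rewrite subrr mulr0.
  by rewrite mul0r.
move=> l nlk; rewrite !mxE (negbTE nlk) mulr0n subr0.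
case: (eqVneq (M l k) 0) => [->|]; first by rewrite mulr0.
move=> /(HMo nlk) Hw'; rewrite HX ?mul0r //.
by move: Hk; rewrite Hw' ltnS.
Qed.

Fixpoint Pm (j : nat) : 'M[F]_n :=
  if j is j'.+1 then Pm j' *m (M - (th j')%:M) else 1%:M.

Lemma Pm_zero j : forall i k, (w k < j)%N -> Pm j i k = 0.
Proof. elim: j => [//|j IH] /=; exact: step. Qed.

Lemma Pm_d : Pm d.+1 = 0.
Proof. by apply/matrixP => i k; rewrite Pm_zero ?mxE // ltnS Hw. Qed.

Lemma rank_Pm j : (n - \rank (Pm j) <= \sum_(t < j) (n - \rank (M - (th t)%:M)%R))%N.
Proof.
elim: j => [|j IH] /=; first by rewrite mxrank1 subnn.
rewrite big_ord_recr /=; apply: arith1 IH; first exact: mxrank_mul_min.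
  exact: rank_leq_col. exact: rank_leq_col.
Qed.

Lemma sum_eig_ge : (n <= \sum_(t < d.+1) \rank (eigenspace M (th t)))%N.
Proof.
have := rank_Pm d.+1; rewrite Pm_d mxrank0 subn0.
move=> H; apply: (leq_trans H); rewrite leq_eqVlt; apply/orP; left; apply/eqP.
by apply: eq_bigr => t _; rewrite mxrank_ker.
Qed.

Definition Di (i : nat) : 'M[F]_n := diag_mx (\row_k ((w k == i)%:R : F)).

Lemma rank_sum_le (A : 'I_n -> 'M[F]_n) :
  (\rank (\sum_k A k)%R <= \sum_k \rank (A k))%N.
Proof.
apply: leq_trans (mxrank_sum_leqif _).1.
by apply: mxrankS; apply: summx_sub_sums => k _.
Qed.

Lemma rank_Di i : (\rank (Di i) <= #|[pred k | w k == i]|)%N.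
Proof.
rewrite /Di diag_mx_sum_delta; apply: leq_trans (rank_sum_le _) _.
rewrite -sum1_card [X in (_ <= X)%N]big_mkcond /=; apply: leq_sum => k _.
rewrite mxE inE; case: (w k == i); first by rewrite scale1r mxrank_delta.
by rewrite scale0r mxrank0.
Qed.

Lemma rank_eig_le i : (i <= d)%N -> (\rank (eigenspace M (th i)) <= #|[pred k | w k == i]|)%N.
Proof.
move=> Hi.
have H0 : (eigenspace M (th i) :&: kermx (Di i))%MS = 0.
  apply/eqP/rowV0P => v; rewrite sub_capmx => /andP[/eigenspaceP ev /sub_kermxP vD].
  case: (eqVneq v 0) => // vn0.
  have [k [vk zeq _]] := minw vn0 ev.
  have ik := Hth Hi (Hw k) zeq.
  have := congr1 (fun m : 'M[F]_(1,n) => m 0 k) vD.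
  by rewrite mul_mx_diag !mxE -ik eqxx mulr1 => /eqP; rewrite (negbTE vk).
have := mxrank_mul_ker (eigenspace M (th i)) (Di i); rewrite H0 mxrank0 addn0 => <-.
apply: leq_trans (mxrankM_maxr _ _) (rank_Di i).
Qed.

Lemma sum_c : (\sum_(i < d.+1) #|[pred k | w k == i]| = n)%N.
Proof.
transitivity #|'I_n|; last exact: card_ord.
rewrite -sum1_card.
rewrite (partition_big (fun k => (inord (w k) : 'I_d.+1)) predT) //=.
apply: eq_bigr => i _; rewrite -sum1_card; apply: eq_bigl => k.
rewrite /= inE; apply/eqP/eqP => [H|<-].
  by apply/val_inj; rewrite /= -H inordK // ltnS.
by rewrite inordK // ltnS.
Qed.

Lemma rank_eig i : (i <= d)%N -> \rank (eigenspace M (th i)) = #|[pred k | w k == i]|.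
Proof.
move=> Hi.
set f := fun t : 'I_d.+1 => \rank (eigenspace M (th t)).
set g := fun t : 'I_d.+1 => #|[pred k | w k == t]|.
have fg t : (f t <= g t)%N by apply: rank_eig_le; rewrite -ltnS.
have Hsum : (\sum_t g t <= \sum_t f t)%N by rewrite sum_c; exact: sum_eig_ge.
have Hi' : (i < d.+1)%N by [].
suff : f (Ordinal Hi') = g (Ordinal Hi') by [].
apply/eqP; rewrite eqn_leq fg /=; apply: contraT; rewrite -ltnNge => lt.
move: Hsum; rewrite (bigD1 (Ordinal Hi')) //= [X in (_ <= X)%N](bigD1 (Ordinal Hi')) //=.
move=> Hle.
have H2 : (f (Ordinal Hi') + \sum_(i0 < d.+1 | i0 != Ordinal Hi') f i0 <
  g (Ordinal Hi') + \sum_(i0 < d.+1 | i0 != Ordinal Hi') g i0)%N.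
  by rewrite -addSn; apply: leq_add lt _; apply: leq_sum => t _.
by move: Hle; rewrite leqNgt H2.
Qed.

Theorem LA_main : diagonalizable M
  /\ (forall z, eigenvalue M z <-> exists2 i, (i <= d)%N & z = th i)
  /\ (forall i, (i <= d)%N -> \rank (eigenspace M (th i)) = 'C(d, i)).
Proof.
split; last split.
- apply/diagonalizablePeigen; exists [seq th i | i <- iota 0 d.+1].
    rewrite map_inj_in_uniq ?iota_uniq // => i j; rewrite !mem_iota !add0n !ltnS.
    by move=> Hi Hj; apply: Hth.
  rewrite big_map -[iota 0 d.+1]/(index_iota 0 d.+1) big_mkord.
  apply/eqmxP; rewrite submx1 sub1mx /row_full.
  have Hd0 := @mxdirect_sum_eigenspace F 'I_d.+1 n M predT (fun i => th i).
  have Hinj : {in predT &, injective (fun i : 'I_d.+1 => th i)}.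
    move=> i j _ _ Hij; apply/val_inj.
    by apply: (Hth _ _ Hij); rewrite -ltnS; exact: ltn_ord.
  move: (Hd0 Hinj); rewrite mxdirectE /= => /eqP ->; apply/eqP.
  transitivity (\sum_(i < d.+1) #|[pred k | w k == i]|)%N; last exact: sum_c.
  apply: eq_bigr => i _; apply: rank_eig; by rewrite -ltnS.
- move=> z; split.
    case/eigenvalueP => v ev vn0; have [k [_ -> _]] := minw vn0 ev.
    by exists (w k).
  case=> i Hi ->; rewrite /eigenvalue -mxrank_eq0 rank_eig // Hc //.
  by rewrite -lt0n bin_gt0.
- by move=> i Hi; rewrite rank_eig // Hc.
Qed.
End LA.

Theorem LA_low (F : fieldType) (n d : nat) (M : 'M[F]_n) (w : 'I_n -> nat) (th : nat -> F) :
  (forall k, (w k <= d)%N) ->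
  (forall i j, (i <= d)%N -> (j <= d)%N -> th i = th j -> i = j) ->
  (forall k, M k k = th (w k)) ->
  (forall k l, k != l -> M k l != 0 -> w k = (w l).+1) ->
  (forall i, (i <= d)%N -> #|[pred k | w k == i]| = 'C(d, i)) ->
  diagonalizable M
  /\ (forall z, eigenvalue M z <-> exists2 i, (i <= d)%N & z = th i)
  /\ (forall i, (i <= d)%N -> \rank (eigenspace M (th i)) = 'C(d, i)).
Proof.
move=> Hw Hth HMd HMo Hc.
have := @LA_main F n d M (fun k => d - w k)%N (fun i => th (d - i)%N).
case.
- by move=> k; rewrite leq_subr.
- move=> i j Hi Hj /Hth; rewrite !leq_subr => /(_ isT isT) H.
  by rewrite -(subKn Hi) -(subKn Hj) H.
- by move=> k; rewrite subKn.
- move=> k l nkl /(HMo _ _ nkl) Hkl; rewrite Hkl subnSK //.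
  by rewrite -Hkl.
- move=> i Hi; rewrite -(bin_sub Hi) -Hc ?leq_subr //; apply: eq_card => k.
  rewrite !inE; apply/eqP/eqP => [<-|->]; first by rewrite subKn.
  by rewrite subKn.
- move=> Hdiag [Heig Hrk]; split => //; split.
  + move=> z; rewrite Heig; split => -[i Hi ->].
      by exists (d - i)%N; rewrite ?leq_subr.
    by exists (d - i)%N; rewrite ?leq_subr ?subKn.
  + move=> i Hi; have := Hrk (d - i)%N (leq_subr _ _); rewrite subKn // => ->.
    exact: bin_sub.
Qed.



Section Rep.
Variable F : fieldType.

Definition tidxinv m n (p : 'I_m * 'I_n) : 'I_(m * n) :=
  cast_ord (mxvec_cast m n) (enum_rank p).

Lemma tidxK m n : cancel (@tidx m n) (@tidxinv m n).
Proof. by move=> k; rewrite /tidx /tidxinv enum_valK cast_ordKV. Qed.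

Lemma tidxinvK m n : cancel (@tidxinv m n) (@tidx m n).
Proof. by move=> p; rewrite /tidx /tidxinv cast_ordK enum_rankK. Qed.

Lemma tidx_inj m n : injective (@tidx m n).
Proof. exact: can_inj (@tidxK m n). Qed.

Lemma tidx_eq m n (k l : 'I_(m * n)) :
  (k == l) = ((tidx k).1 == (tidx l).1) && ((tidx k).2 == (tidx l).2).
Proof. by rewrite -xpair_eqE -surjective_pairing -surjective_pairing (inj_eq (@tidx_inj m n)). Qed.

Lemma tensE m n (A : 'M[F]_m) (B : 'M[F]_n) k l :
  tensmx A B k l = A (tidx k).1 (tidx l).1 * B (tidx k).2 (tidx l).2.
Proof. by rewrite mxE. Qed.


Definition diagv n (A : 'M[F]_n) (f : 'I_n -> F) := forall k l, A k l = if k == l then f k else 0.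
Definition isdiag n (A : 'M[F]_n) := forall k l, A k l != 0 -> k = l.
Definition raise n (A : 'M[F]_n) (w : 'I_n -> nat) := forall k l, A k l != 0 -> w l = (w k).+1.
Definition lower n (A : 'M[F]_n) (w : 'I_n -> nat) := forall k l, A k l != 0 -> w k = (w l).+1.

Lemma diagv_isdiag n (A : 'M[F]_n) f : diagv A f -> isdiag A.
Proof. by move=> H k l; rewrite H; case: (eqVneq k l) => // _; rewrite eqxx. Qed.

Lemma isdiag1 n : isdiag (1%:M : 'M[F]_n).
Proof. by move=> k l; rewrite mxE; case: (eqVneq k l) => //= _; rewrite eqxx. Qed.

Lemma tens_isdiag m n (A : 'M[F]_m) (B : 'M[F]_n) : isdiag A -> isdiag B -> isdiag (tensmx A B).
Proof.
move=> HA HB k l; rewrite tensE mulf_eq0 negb_or => /andP[/HA h1 /HB h2].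
by apply/eqP; rewrite tidx_eq h1 h2 !eqxx.
Qed.

Lemma tens_diagv m n (A : 'M[F]_m) (B : 'M[F]_n) fa fb : diagv A fa -> diagv B fb ->
  diagv (tensmx A B) (fun k => fa (tidx k).1 * fb (tidx k).2).
Proof.
move=> HA HB k l; rewrite tensE HA HB tidx_eq.
by case: ((tidx k).1 == (tidx l).1); case: ((tidx k).2 == (tidx l).2); rewrite /= ?mulr0 ?mul0r.
Qed.

Lemma sum_neq0 (x y : F) : x + y != 0 -> x != 0 \/ y != 0.
Proof. by case: (eqVneq x 0) => [->|]; [rewrite add0r; right|left]. Qed.

Lemma tens_raise1 m n (A : 'M[F]_m) (B : 'M[F]_n) (C : 'M[F]_n) wa wb :
  raise A wa -> isdiag B -> raise C wb ->
  raise (tensmx A B + tensmx 1 C) (fun k => (wa (tidx k).1 + wb (tidx k).2)%N).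
Proof.
move=> HA HB HC k l; rewrite mxE => /sum_neq0[]; rewrite tensE mulf_eq0 negb_or => /andP[h1 h2].
  by rewrite (HA _ _ h1) (HB _ _ h2).
by rewrite (isdiag1 h1) (HC _ _ h2) addnS.
Qed.

Lemma tens_raise2 m n (A : 'M[F]_m) (B : 'M[F]_m) (C : 'M[F]_n) wa wb :
  raise A wa -> isdiag B -> raise C wb ->
  raise (tensmx A 1 + tensmx B C) (fun k => (wa (tidx k).1 + wb (tidx k).2)%N).
Proof.
move=> HA HB HC k l; rewrite mxE => /sum_neq0[]; rewrite tensE mulf_eq0 negb_or => /andP[h1 h2].
  by rewrite (HA _ _ h1) (isdiag1 h2).
by rewrite (HB _ _ h1) (HC _ _ h2) addnS.
Qed.

Lemma tens_lower1 m n (A : 'M[F]_m) (B : 'M[F]_n) (C : 'M[F]_n) wa wb :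
  lower A wa -> isdiag B -> lower C wb ->
  lower (tensmx A B + tensmx 1 C) (fun k => (wa (tidx k).1 + wb (tidx k).2)%N).
Proof.
move=> HA HB HC k l; rewrite mxE => /sum_neq0[]; rewrite tensE mulf_eq0 negb_or => /andP[h1 h2].
  by rewrite (HA _ _ h1) (HB _ _ h2).
by rewrite (isdiag1 h1) (HC _ _ h2) addnS.
Qed.

Lemma tens_lower2 m n (A : 'M[F]_m) (B : 'M[F]_m) (C : 'M[F]_n) wa wb :
  lower A wa -> isdiag B -> lower C wb ->
  lower (tensmx A 1 + tensmx B C) (fun k => (wa (tidx k).1 + wb (tidx k).2)%N).
Proof.
move=> HA HB HC k l; rewrite mxE => /sum_neq0[]; rewrite tensE mulf_eq0 negb_or => /andP[h1 h2].
  by rewrite (HA _ _ h1) (isdiag1 h2).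
by rewrite (HB _ _ h1) (HC _ _ h2) addnS.
Qed.

Variable q : F.
Hypothesis Hq : q != 0.

Definition Good n (X : uqrep F n) (w : 'I_n -> nat) (d : nat) :=
  diagv (K0 X) (fun k => q ^+ (2 * w k) / q ^+ d) /\
      diagv (K1 X) (fun k => q ^+ d / q ^+ (2 * w k)) /\
      (isdiag (K0i X) /\ isdiag (K1i X)) /\
      (raise (E0p X) w /\ raise (E1m X) w) /\
      (lower (E1p X) w /\ lower (E0m X) w) /\
      forall k, (w k <= d)%N.

Lemma Good_tens m n (X : uqrep F m) (Y : uqrep F n) wx wy dx dy :
  Good X wx dx -> Good Y wy dy ->
  Good (tensrep X Y) (fun k => (wx (tidx k).1 + wy (tidx k).2)%N) (dx + dy).
Proof.
move=> [HX0 [HX1 [[HX0i HX1i] [[HX0p HX1m] [[HX1p HX0m] HXw]]]]].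
move=> [HY0 [HY1 [[HY0i HY1i] [[HY0p HY1m] [[HY1p HY0m] HYw]]]]].
split; [|split; [|split; [|split; [|split]]]] => /=.
- move=> k l; rewrite (tens_diagv HX0 HY0); case: (k == l) => //.
  by rewrite mulf_div mulnDr !exprD.
- move=> k l; rewrite (tens_diagv HX1 HY1); case: (k == l) => //.
  by rewrite mulf_div mulnDr !exprD.
- by split; [exact: (tens_isdiag HX0i HY0i) | exact: (tens_isdiag HX1i HY1i)].
- split; first exact: tens_raise1 (diagv_isdiag HY0) HY0p.
  exact: tens_raise2 HX1i HY1m.
- split; first exact: tens_lower1 (diagv_isdiag HY1) HY1p.
  exact: tens_lower2 HX0i HY0m.
- by move=> k; apply: leq_add.
Qed.


Lemma Good_triv : Good (trivrep F) (fun _ => 0%N) 0.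
Proof.
split; [|split; [|split; [|split; [|split]]]] => /=.
- by move=> k l; rewrite mxE !expr0 divr1; case: (k == l).
- by move=> k l; rewrite mxE !expr0 divr1; case: (k == l).
- by split; exact: isdiag1.
- by split => k l; rewrite mxE eqxx.
- by split => k l; rewrite mxE eqxx.
- by [].
Qed.

Lemma Good_V a : Good (Vrep q a) (fun i => nat_of_ord i) 1.
Proof.
split; [|split; [|split; [|split; [|split]]]] => /=.
- move=> [[|[|i]] Hi] [[|[|j]] Hj] //=; rewrite mxE //=.
    by rewrite expr0 expr1 div1r.
  by change (q = q ^+ 2 / q ^+ 1); rewrite expr2 expr1 mulfK.
- move=> [[|[|i]] Hi] [[|[|j]] Hj] //=; rewrite mxE //=.
    by rewrite expr0 expr1 divr1.
  by change (q^-1 = q ^+ 1 / q ^+ 2); rewrite expr1 expr2 invfM mulrA divff // div1r.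
- split; move=> [[|[|i]] Hi] [[|[|j]] Hj] //=; rewrite mxE //=; rewrite ?eqxx //= => *; exact/val_inj.
- split; move=> [[|[|i]] Hi] [[|[|j]] Hj] //=; rewrite mxE //=; rewrite ?eqxx //= => *; exact/val_inj.
- split; move=> [[|[|i]] Hi] [[|[|j]] Hj] //=; rewrite mxE //=; rewrite ?eqxx //= => *; exact/val_inj.
- by move=> [[|[|i]] Hi].
Qed.


Lemma ce m n (e1 e2 : n = m) (k : 'I_n) : cast_ord e1 k = cast_ord e2 k.
Proof. exact: val_inj. Qed.

Lemma Good_cast m n (e : m = n) (e' : n = m) (X : uqrep F m) w d :
  Good X w d -> Good (castrep e X) (fun k => w (cast_ord e' k)) d.
Proof.
move=> [HX0 [HX1 [[HX0i HX1i] [[HX0p HX1m] [[HX1p HX0m] HXw]]]]].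
have Hc k : cast_ord (esym e) k = cast_ord e' k by exact: ce.
have Heq k l : (cast_ord e' k == cast_ord e' l) = (k == l) by rewrite (inj_eq (@cast_ord_inj _ _ _)).
split; [|split; [|split; [|split; [|split]]]] => /=.
- by move=> k l; rewrite castmxE /= !Hc HX0 Heq.
- by move=> k l; rewrite castmxE /= !Hc HX1 Heq.
- split=> k l; rewrite castmxE /= !Hc.
    by move=> /HX0i /(congr1 val) H; apply/val_inj; exact: H.
  by move=> /HX1i /(congr1 val) H; apply/val_inj; exact: H.
- split=> k l; rewrite castmxE /= !Hc; [exact: HX0p | exact: HX1m].
- split=> k l; rewrite castmxE /= !Hc; [exact: HX1p | exact: HX0m].
- by move=> k; apply: HXw.
Qed.

Lemma cnt_cast m n (e' : n = m) (w : 'I_m -> nat) i :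
  #|[pred k : 'I_n | w (cast_ord e' k) == i]| = #|[pred k : 'I_m | w k == i]|.
Proof.
rewrite -!sum1_card (reindex (cast_ord e')) /=; last first.
  by exists (cast_ord (esym e')) => k _; [exact: cast_ordK | exact: cast_ordKV].
by apply: eq_bigl => k; rewrite !inE.
Qed.


Lemma cnt_tens N (w : 'I_N -> nat) i :
  #|[pred k : 'I_(2 * N) | ((tidx k).1 + w (tidx k).2)%N == i]| =
  (#|[pred j | w j == i]| + (if i is i'.+1 then #|[pred j | w j == i']| else 0))%N.
Proof.
rewrite -sum1_card (reindex (@tidxinv 2 N)) /=; last first.
  by exists (@tidx 2 N) => p _; [exact: tidxinvK | exact: tidxK].
rewrite (eq_bigl (fun p : 'I_2 * 'I_N => ((p.1 : nat) + w p.2)%N == i)); last first.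
  by move=> p; rewrite !inE tidxinvK.
rewrite -(pair_big_dep predT (fun (a : 'I_2) j => ((a : nat) + w j)%N == i) (fun _ _ => 1%N)) /=.
rewrite !big_ord_recl big_ord0 addn0 /=.
have E1 : (\sum_(j < N | (0 + w j)%N == i) 1 = #|[pred j | w j == i]|)%N.
  by rewrite -sum1_card; apply: eq_bigl => j; rewrite inE add0n.
rewrite E1; congr (_ + _)%N.
case: i {E1} => [|i].
  by rewrite big_pred0.
by rewrite -sum1_card; apply: eq_bigl => j; rewrite inE.
Qed.


Local Unset Implicit Arguments.
Fixpoint wt (s : seq F) : 'I_(2 ^ size s) -> nat :=
  match s return 'I_(2 ^ size s) -> nat with
  | [::] => fun _ => 0%N
  | a :: s' => fun k => ((tidx (cast_ord (expnS 2 (size s')) k)).1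
                         + wt s' (tidx (cast_ord (expnS 2 (size s')) k)).2)%N
  end.

Lemma Vtens_good s : Good (Vtens q s) (wt s) (size s) /\
  forall i, #|[pred k | wt s k == i]| = 'C(size s, i).
Proof.
elim: s => [|a s [IHg IHc]] /=.
  split; first exact: Good_triv.
  case=> [|i].
    by rewrite (eq_card (B := predT)) ?card_ord // => k; rewrite !inE.
  by rewrite (eq_card (B := pred0)) ?card0 // => k; rewrite !inE.
split.
  exact: (Good_cast (esym (expnS 2 (size s))) (expnS 2 (size s)) (Good_tens (Good_V a) IHg)).
move=> i.
have := cnt_cast (expnS 2 (size s)) (fun k' : 'I_(2 * 2 ^ size s) => ((tidx k').1 + wt s (tidx k').2)%N) i.
move=> ->; rewrite cnt_tens IHc.
case: i => [|i]; first by rewrite !bin0 addn0.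
by rewrite IHc binS addnC.
Qed.

End Rep.
Arguments wt {F} s _.
Arguments Vtens_good {F q} Hq s.

Lemma diag_mul (F : fieldType) N (K E : 'M[F]_N) f : diagv K f ->
  forall k l, (K *m E) k l = f k * E k l.
Proof.
move=> HK k l; rewrite mxE (bigD1 k) //= big1 ?addr0; first by rewrite HK eqxx.
by move=> j njk; rewrite HK eq_sym (negbTE njk) mul0r.
Qed.

Lemma entry5 (F : fieldType) N (K0' K1' E KE : 'M[F]_N) a b c u v k l :
  (a%:M + b *: K0' + c *: K1' + u *: E + v *: KE) k l =
  a *+ (k == l) + b * K0' k l + c * K1' k l + u * E k l + v * KE k l.
Proof. by rewrite !mxE. Qed.

Lemma theta_eq (F : fieldType) (q a b c : F) d i : q != 0 ->
  thetaseq q a b c d i = a + b * (q ^+ (2 * i) / q ^+ d) + c * (q ^+ d / q ^+ (2 * i)).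
Proof. by move=> Hq; rewrite /thetaseq !expfzDr // -!invr_expz. Qed.

Lemma raise0 (F : fieldType) N (E : 'M[F]_N) w k : raise E w -> E k k = 0.
Proof.
move=> H; apply/eqP; apply: contraT => /H /eqP.
by rewrite -addn1 -{1}(addn0 (w k)) eqn_add2l.
Qed.

Lemma lower0 (F : fieldType) N (E : 'M[F]_N) w k : lower E w -> E k k = 0.
Proof.
move=> H; apply/eqP; apply: contraT => /H /eqP.
by rewrite -addn1 -{1}(addn0 (w k)) eqn_add2l.
Qed.

Lemma A_props (F : fieldType) (q a b c u v : F) (s : seq F) : q != 0 ->
  (forall k, Aop q a b c u v s k k = thetaseq q a b c (size s) (wt s k)) /\
  (forall k l, k != l -> Aop q a b c u v s k l != 0 -> wt s l = (wt s k).+1).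
Proof.
move=> Hq; have [[HX0 [HX1 [[HX0i HX1i] [[HX0p HX1m] [[HX1p HX0m] HXw]]]]] _] := Vtens_good Hq s.
rewrite /Aop /=; split.
  move=> k; rewrite entry5 (diag_mul _ HX1) HX0 HX1 eqxx (raise0 k HX0p) (raise0 k HX1m).
  by rewrite theta_eq // !mulr0 !addr0 mulr1n.
move=> k l nkl; rewrite entry5 (diag_mul _ HX1) HX0 HX1 (negbTE nkl) mulr0n !mulr0 !add0r.
case/sum_neq0; rewrite mulf_eq0 negb_or => /andP[_]; first exact: HX0p.
by rewrite mulf_eq0 negb_or => /andP[_]; exact: HX1m.
Qed.

Lemma As_props (F : fieldType) (q a b c u v : F) (s : seq F) : q != 0 ->
  (forall k, Asop q a b c u v s k k = thetaseq q a b c (size s) (wt s k)) /\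
  (forall k l, k != l -> Asop q a b c u v s k l != 0 -> wt s k = (wt s l).+1).
Proof.
move=> Hq; have [[HX0 [HX1 [[HX0i HX1i] [[HX0p HX1m] [[HX1p HX0m] HXw]]]]] _] := Vtens_good Hq s.
rewrite /Asop /=; split.
  move=> k; rewrite entry5 (diag_mul _ HX0) HX0 HX1 eqxx (lower0 k HX1p) (lower0 k HX0m).
  by rewrite theta_eq // !mulr0 !addr0 mulr1n.
move=> k l nkl; rewrite entry5 (diag_mul _ HX0) HX0 HX1 (negbTE nkl) mulr0n !mulr0 !add0r.
case/sum_neq0; rewrite mulf_eq0 negb_or => /andP[_]; first exact: HX1p.
by rewrite mulf_eq0 negb_or => /andP[_]; exact: HX0m.
Qed.

End Aux.
Import Aux.

Theorem lemma9p4 (F : closedFieldType) (d : nat)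
  (q a b c as_ bs cs u v us vs : F) (alpha : seq F)
  (Halpha : size alpha = d) (Halpha0 : forall x, x \in alpha -> x != 0)
  (Hq : q != 0) (Hb : b != 0) (Hc : c != 0) (Hbs : bs != 0) (Hcs : cs != 0)
  (Hq2 : q ^+ 2 != 1) (Hq2' : q ^+ 2 != -1)
  (Hth : forall i j, (i <= d)%N -> (j <= d)%N ->
           thetaseq q a b c d i = thetaseq q a b c d j -> i = j)
  (Hths : forall i j, (i <= d)%N -> (j <= d)%N ->
           thetaseq q as_ bs cs d i = thetaseq q as_ bs cs d j -> i = j)
  (Huv : u * vs = - (b * bs * q^-1 * (q - q^-1) ^+ 2))
  (Hvu : v * us = - (c * cs * q^-1 * (q - q^-1) ^+ 2)) :
  let A := Aop q a b c u v alpha in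
  let As := Asop q as_ bs cs us vs alpha in
  (diagonalizable A
   /\ (forall z, eigenvalue A z <-> exists2 i, (i <= d)%N & z = thetaseq q a b c d i)
   /\ (forall i, (i <= d)%N -> \rank (eigenspace A (thetaseq q a b c d i)) = 'C(d, i)))
  /\
  (diagonalizable As
   /\ (forall z, eigenvalue As z <-> exists2 i, (i <= d)%N & z = thetaseq q as_ bs cs d i)
   /\ (forall i, (i <= d)%N -> \rank (eigenspace As (thetaseq q as_ bs cs d i)) = 'C(d, i))).
Proof.
move=> A As; subst d.
have [[_ [_ [_ [_ [_ HXw]]]]] Hcnt] := Vtens_good Hq alpha.
split.
  have [HMd HMo] := A_props a b c u v alpha Hq.
  apply: (LA_main HXw Hth HMd HMo) => i _; exact: Hcnt.
have [HMd HMo] := As_props as_ bs cs us vs alpha Hq.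
apply: (LA_low HXw Hths HMd HMo) => i _; exact: Hcnt.
Qed.
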